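(* The graph ${\rm SR}(m,n)$ is not determined by its spectrum (that is, there is a graph not isomorphic to ${\rm SR}(m,n)$ whose adjacency matrix has the same spectrum) when (a) $m=4$ and $n\ge 3$, or (b) $n=3$ and $m\ge 4$.
   Context: ${\rm SR}(m,n)$ is the graph whose vertices are the vectors in $\{0,1,2,\dots\}^m$ with coordinate sum $n$, two vertices being adjacent when they differ in precisely two coordinate positions. *)

(* Defs.v *)
From HB Require Import structures.
From mathcomp Require Import all_boot all_order all_algebra.
Set Implicit Arguments. Unset Strict Implicit. Unset Printing Implicit Defensive.
Import GRing.Theory.

(* Vertices of SR(m,n): vectors in {0,1,2,...}^m with coordinate sum n.
   Each coordinate is necessarily <= n, so we encode a vertex as a finite
   function 'I_m -> 'I_n.+1 whose coordinate sum is n. *)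
Definition sr_vertex_pred (m n : nat) (f : {ffun 'I_m -> 'I_n.+1}) : bool :=
  (\sum_(i < m) (f i : nat))%N == n.

Definition SRV (m n : nat) : finType :=
  {f : {ffun 'I_m -> 'I_n.+1} | @sr_vertex_pred m n f}.

Definition sr_adj (m n : nat) : rel (SRV m n) :=
  fun u v => #|[set i : 'I_m | val u i != val v i]| == 2.

Definition adj_mx (T : finType) (e : rel T) : 'M[int]_#|T| :=
  \matrix_(i, j) ((e (enum_val i) (enum_val j))%:R)%R.

(* Two graphs have the same spectrum iff their adjacency matrices have the
   same characteristic polynomial (eigenvalues with multiplicities). *)
Definition cospectral (T1 T2 : finType) (e1 : rel T1) (e2 : rel T2) : Prop :=
  char_poly (adj_mx e1) = char_poly (adj_mx e2).

Definition simple_graph (T : finType) (e : rel T) : Prop :=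
  symmetric e /\ irreflexive e.

Definition graph_iso (T1 T2 : finType) (e1 : rel T1) (e2 : rel T2) : Prop :=
  exists f : T1 -> T2, bijective f /\ forall x y, e2 (f x) (f y) = e1 x y.

(* Main.v *)
From HB Require Import structures.
From mathcomp Require Import all_boot all_order all_algebra.
From mathcomp Require Import ring lra zify.
Require Import Defs.
Set Implicit Arguments. Unset Strict Implicit. Unset Printing Implicit Defensive.
Import GRing.Theory Num.Theory.
Section GM.
Local Open Scope ring_scope.
Variables (T : finType) (e : rel T) (Cs : {set T}).
Hypothesis esym : symmetric e.
Hypothesis eirr : irreflexive e.
Hypothesis Ccard : #|Cs| = 4%N.
Hypothesis Cclique : forall s t, s \in Cs -> t \in Cs -> s != t -> e s t.

Definition cntN (w : T) : nat := #|[set t in Cs | e w t]|.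
Hypothesis Cout : forall w, w \notin Cs -> cntN w = 0%N \/ cntN w = 2%N.

Definition swr : rel T := fun u v =>
  if (u \in Cs) && (v \notin Cs) then e u v (+) (cntN v == 2)%N
  else if (v \in Cs) && (u \notin Cs) then e u v (+) (cntN u == 2)%N
  else e u v.

Definition qf (t w : T) : rat :=
  if (t \in Cs) && (w \in Cs) then 2^-1 - (t == w)%:R else (t == w)%:R.

Lemma sum_delta (F : T -> rat) w : \sum_t F t * (t == w)%:R = F w.
Proof.
rewrite (bigD1 w) //= eqxx mulr1 big1 ?addr0 // => t /negbTE ->; by rewrite mulr0.
Qed.

Lemma sum_delta_l (F : T -> rat) w : \sum_t (w == t)%:R * F t = F w.
Proof.
rewrite (bigD1 w) //= eqxx mul1r big1 ?addr0 // => t; rewrite eq_sym => /negbTE ->; by rewrite mul0r.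
Qed.

Lemma sum_ind (F : T -> rat) :
  \sum_t F t * (t \in Cs)%:R = \sum_(t in Cs) F t.
Proof.
rewrite [RHS]big_mkcond /=; apply: eq_bigr => t _; case: (t \in Cs); by rewrite ?mulr1 ?mulr0.
Qed.

Lemma sum_ind_l (F : T -> rat) :
  \sum_t (t \in Cs)%:R * F t = \sum_(t in Cs) F t.
Proof.
rewrite [RHS]big_mkcond /=; apply: eq_bigr => t _; case: (t \in Cs); by rewrite ?mul1r ?mul0r.
Qed.

Lemma sum_q_r (f : rel T) u w : \sum_t (f u t)%:R * qf t w =
  if w \in Cs then 2^-1 * (\sum_(t in Cs) (f u t)%:R) - (f u w)%:R else (f u w)%:R.
Proof.
case Hw: (w \in Cs).
  rewrite (eq_bigr (fun t => 2^-1 * ((f u t)%:R * (t \in Cs)%:R) - (f u t)%:R * (t == w)%:R)).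
    by rewrite sumrB -mulr_sumr sum_ind sum_delta.
  move=> t _; rewrite /qf Hw andbT.
  case Ht: (t \in Cs); last first.
    have -> : (t == w) = false by apply/eqP => E; rewrite E Hw in Ht.
    by rewrite !mulr0 subr0.
  by rewrite mulr1 mulrBr mulrC.
rewrite -(sum_delta (fun t => (f u t)%:R)); apply: eq_bigr => t _.
by rewrite /qf Hw andbF.
Qed.

Lemma sum_q_l (f : rel T) u w : \sum_t qf u t * (f t w)%:R =
  if u \in Cs then 2^-1 * (\sum_(t in Cs) (f t w)%:R) - (f u w)%:R else (f u w)%:R.
Proof.
case Hu: (u \in Cs).
  rewrite (eq_bigr (fun t => 2^-1 * ((t \in Cs)%:R * (f t w)%:R) - (u == t)%:R * (f t w)%:R)).
    by rewrite sumrB -mulr_sumr sum_ind_l sum_delta_l.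
  move=> t _; rewrite /qf Hu /=.
  case Ht: (t \in Cs); last first.
    have -> : (u == t) = false by apply/eqP => E; rewrite -E Hu in Ht.
    by rewrite !mul0r mulr0 subr0.
  by rewrite mul1r mulrBl.
rewrite -(sum_delta_l (fun t => (f t w)%:R)); apply: eq_bigr => t _.
by rewrite /qf Hu.
Qed.

Lemma sum_card (P : pred T) :
  \sum_(t in Cs) (P t)%:R = (#|[set t in Cs | P t]|)%:R :> rat.
Proof.
rewrite (eq_bigr (fun t => if P t then 1 else 0)); last by move=> t _; case: (P t).
rewrite -big_mkcondr sumr_const; congr (_ *+ _).
by apply: eq_card => t; rewrite !inE.
Qed.

Lemma cnt_in u : u \in Cs -> cntN u = 3%N.
Proof.
move=> Hu; rewrite /cntN.
have -> : [set t in Cs | e u t] = Cs :\ u.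
  apply/setP => t; rewrite !inE.
  case: (eqVneq t u) => [->|ne]; first by rewrite eirr andbF.
  case Ht: (t \in Cs) => //=; apply: Cclique => //; by rewrite eq_sym.
by move: (cardsD1 u Cs); rewrite Hu Ccard => -[->].
Qed.

Lemma cnt_sw u : (\sum_(t in Cs) (swr u t)%:R) = (\sum_(t in Cs) (e u t)%:R :> rat).
Proof.
case Hu: (u \in Cs).
  by apply: eq_bigr => t Ht; rewrite /swr Hu Ht.
rewrite (eq_bigr (fun t => (e u t (+) (cntN u == 2)%N)%:R)); last first.
  by move=> t Ht; rewrite /swr Hu Ht.
case: (Cout (negbT Hu)) => Hc; rewrite Hc //=.
  by apply: eq_bigr => t _; rewrite addbF.
rewrite (eq_bigr (fun t => 1 - (e u t)%:R)); last by move=> t _; case: (e u t).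
rewrite sumrB sumr_const sum_card -/(cntN u) Hc.
have -> : #|[pred t in Cs]| = 4%N by rewrite -Ccard; apply: eq_card.
by rewrite -natrB.
Qed.

Lemma key u w : \sum_t (swr u t)%:R * qf t w = \sum_t qf u t * (e t w)%:R.
Proof.
rewrite sum_q_r sum_q_l cnt_sw.
have symS : forall x, \sum_(t in Cs) (e t x)%:R = \sum_(t in Cs) (e x t)%:R :> rat.
  by move=> x; apply: eq_bigr => t _; rewrite esym.
rewrite symS !sum_card -!/(cntN _).
case Hu: (u \in Cs); case Hw: (w \in Cs).
- by rewrite /swr Hu Hw /= !cnt_in.
- rewrite /swr Hu Hw /=.
  case: (Cout (negbT Hw)) => Hc; rewrite Hc /=.
    have -> : e u w = false.
      apply/negP => E; move: Hc; rewrite /cntN => /eqP; rewrite cards_eq0 => /eqP/setP/(_ u).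
      by rewrite !inE Hu esym E.
    by rewrite mulr0 sub0r oppr0.
  rewrite (_ : 2^-1 * 2%:R = 1 :> rat); last by rewrite mulVf.
  by case: (e u w) => /=; rewrite ?subr0 ?subrr.
- rewrite /swr Hu Hw /=.
  case: (Cout (negbT Hu)) => Hc; rewrite Hc /=.
    have -> : e u w = false.
      apply/negP => E; move: Hc; rewrite /cntN => /eqP; rewrite cards_eq0 => /eqP/setP/(_ w).
      by rewrite !inE Hw E.
    by rewrite mulr0 sub0r oppr0.
  rewrite (_ : 2^-1 * 2%:R = 1 :> rat); last by rewrite mulVf.
  by case: (e u w) => /=; rewrite ?subr0 ?subrr.
- by rewrite /swr Hu Hw.
Qed.

End GM.
Section GMmx.
Local Open Scope ring_scope.
Variables (T : finType) (e : rel T) (Cs : {set T}).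
Hypothesis esym : symmetric e.
Hypothesis eirr : irreflexive e.
Hypothesis Ccard : #|Cs| = 4%N.
Hypothesis Cclique : forall s t, s \in Cs -> t \in Cs -> s != t -> e s t.
Hypothesis Cout : forall w, w \notin Cs -> cntN e Cs w = 0%N \/ cntN e Cs w = 2%N.

Definition adjR (f : rel T) : 'M[rat]_#|T| :=
  \matrix_(i, j) (f (enum_val i) (enum_val j))%:R.
Definition Qm : 'M[rat]_#|T| := \matrix_(i, j) qf Cs (enum_val i) (enum_val j).

Lemma sumT (F : T -> rat) : \sum_(k < #|T|) F (enum_val k) = \sum_t F t.
Proof. by rewrite -big_enum_val. Qed.

Lemma commQ : adjR (swr e Cs) *m Qm = Qm *m adjR e.
Proof.
apply/matrixP => i j; rewrite !mxE.
under eq_bigr do rewrite !mxE.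
under [RHS]eq_bigr do rewrite !mxE.
rewrite (sumT (fun t => ((swr e Cs (enum_val i) t)%:R * qf Cs t (enum_val j)))).
rewrite (sumT (fun t => (qf Cs (enum_val i) t * (e t (enum_val j))%:R))).
exact: key.
Qed.

Lemma QQ : Qm *m Qm = 1%:M.
Proof.
apply/matrixP => i j; rewrite !mxE.
under eq_bigr do rewrite !mxE.
rewrite (sumT (fun t => (qf Cs (enum_val i) t * qf Cs t (enum_val j)))).
rewrite -(inj_eq enum_val_inj).
move: (enum_val i) (enum_val j) => u w.
case Hw: (w \in Cs).
  rewrite (eq_bigr (fun t => 2^-1 * (qf Cs u t * (t \in Cs)%:R) - qf Cs u t * (t == w)%:R)).
    rewrite sumrB -mulr_sumr sum_ind sum_delta.
    case Hu: (u \in Cs).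
      rewrite (eq_bigr (fun t => 2^-1 - (u == t)%:R)); last by move=> t Ht; rewrite /qf Hu Ht.
      rewrite sumrB sumr_const.
      have -> : #|[pred t in Cs]| = 4%N by rewrite -Ccard; apply: eq_card.
      rewrite (bigD1 u) //= eqxx big1 ?addr0; last first.
        by move=> t /andP[_]; rewrite eq_sym => /negbTE ->.
      rewrite /qf Hu Hw /=.
      have h : 2^-1 *+ 4 - 1 = 1 :> rat.
        by rewrite -mulr_natr; field.
      by rewrite h mulr1 opprB addrC subrK.
    rewrite (eq_bigr (fun t => 0)); last first.
      move=> t Ht; rewrite /qf Hu /=.
      by have -> : (u == t) = false by apply/eqP => E; rewrite E Ht in Hu.
    rewrite big1 // mulr0 sub0r /qf Hu /=.
    by have -> : (u == w) = false by apply/eqP => E; rewrite E Hw in Hu.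
  move=> t _; rewrite /qf Hw andbT.
  case Ht: (t \in Cs); last first.
    have -> : (t == w) = false by apply/eqP => E; rewrite E Hw in Ht.
    by rewrite !mulr0 subr0.
  by rewrite mulr1 mulrBr mulrC.
rewrite (eq_bigr (fun t => qf Cs u t * (t == w)%:R)); last first.
  by move=> t _; rewrite /qf Hw andbF.
by rewrite sum_delta /qf Hw andbF.
Qed.

Lemma cp_rat : char_poly (adjR (swr e Cs)) = char_poly (adjR e).
Proof.
set P := map_mx polyC Qm.
have H1 : char_poly_mx (adjR (swr e Cs)) *m P = P *m char_poly_mx (adjR e).
  rewrite /char_poly_mx mulmxBl mulmxBr -!map_mxM commQ; congr (_ - _).
  by rewrite scalar_mxC.
have dQ : \det Qm != 0.
  apply/negP => /eqP d0; move: (det_mulmx Qm Qm); rewrite QQ det1 d0 mulr0.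
  by move/eqP; rewrite oner_eq0.
have dP : \det P != 0 by rewrite /P det_map_mx polyC_eq0.
move: (congr1 determinant H1); rewrite !det_mulmx mulrC; apply: (mulfI dP).
Qed.

Lemma cp_int : char_poly (adj_mx (swr e Cs)) = char_poly (adj_mx e).
Proof.
have M : forall f : rel T, map_mx (intr : int -> rat) (adj_mx f) = adjR f.
  by move=> f; apply/matrixP => i j; rewrite !mxE rmorph_nat.
apply/polyP => k; apply: (@intr_inj rat).
rewrite -!coef_map.
have E := map_char_poly (intr : int -> rat).
by rewrite !E !M cp_rat.
Qed.

End GMmx.
Section VT.
Variables m n : nat.
Local Notation V := (SRV m n).

Definition co (v : V) (i : 'I_m) : nat := val (val v i).

Lemma co_sum (v : V) : \sum_i co v i = n.
Proof. by apply/eqP; exact: (valP v). Qed.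

Lemma vext (u v : V) : (forall i, co u i = co v i) -> u = v.
Proof. by move=> H; apply: val_inj; apply/ffunP => i; apply: val_inj; exact: H. Qed.

Lemma le_sum (f : 'I_m -> nat) i : f i <= \sum_j f j.
Proof. by rewrite (bigD1 i) //= leq_addr. Qed.

Lemma mkV_lt (f : 'I_m -> nat) (H : \sum_i f i = n) i : f i < n.+1.
Proof. rewrite ltnS; have := le_sum f i; by rewrite H. Qed.

Definition mkV (f : 'I_m -> nat) (H : \sum_i f i = n) : V.
Proof.
refine (exist _ [ffun i => Ordinal (mkV_lt H i)] _).
rewrite /sr_vertex_pred; apply/eqP; etransitivity; [|exact H]. by apply: eq_bigr => i _; rewrite ffunE.
Defined.

Lemma co_mkV f H i : co (@mkV f H) i = f i.
Proof. by rewrite /co /= ffunE. Qed.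

Lemma adj_set (u v : V) : [set i | val u i != val v i] = [set i | co u i != co v i].
Proof. by apply/setP => i; rewrite !inE. Qed.

Lemma adjP (u v : V) : sr_adj u v <-> exists a b, [/\ a != b, co u a != co v a, co u b != co v b &
   forall i, i != a -> i != b -> co u i = co v i].
Proof.
rewrite /sr_adj adj_set; split.
  case/cards2P => a [b [ab E]]; exists a, b; split => //.
  - by move/setP: E => /(_ a); rewrite !inE eqxx /= => ->.
  - by move/setP: E => /(_ b); rewrite !inE eqxx orbT /= => ->.
  move=> i ia ib; move/setP: E => /(_ i); rewrite !inE (negbTE ia) (negbTE ib) /=.
  by move/negbFE/eqP.
case=> a [b [ab ha hb ho]]; apply/cards2P; exists a, b; split => //.
apply/setP => i; rewrite !inE.
case: (eqVneq i a) => [->|ia]; first by rewrite ha.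
case: (eqVneq i b) => [->|ib]; first by rewrite hb.
by rewrite ho ?eqxx.
Qed.

Lemma adjI (u v : V) a b : a != b -> co u a != co v a -> co u b != co v b ->
   (forall i, i != a -> i != b -> co u i = co v i) -> sr_adj u v.
Proof. by move=> *; apply/adjP; exists a, b. Qed.

Lemma not_adj3 (u v : V) p q r : p != q -> p != r -> q != r ->
  co u p != co v p -> co u q != co v q -> co u r != co v r -> ~~ sr_adj u v.
Proof.
move=> pq pr qr hp hq hr; apply/negP => /adjP [a [b [ab _ _ ho]]].
case: (eqVneq p a) => [Ep|pa].
  case: (eqVneq q b) => [Eq|qb].
    by move: (ho r); rewrite -Ep -Eq eq_sym pr eq_sym qr => /(_ isT isT)/eqP; rewrite (negbTE hr).
  by move: (ho q); rewrite -Ep eq_sym pq qb => /(_ isT isT)/eqP; rewrite (negbTE hq).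
case: (eqVneq p b) => [Ep|pb]; last by move: (ho p pa pb) => /eqP; rewrite (negbTE hp).
case: (eqVneq q a) => [Eq|qa].
  by move: (ho r); rewrite -Ep -Eq eq_sym qr eq_sym pr => /(_ isT isT)/eqP; rewrite (negbTE hr).
by move: (ho q); rewrite -Ep qa eq_sym pq => /(_ isT isT)/eqP; rewrite (negbTE hq).
Qed.

Lemma sum2 (f : 'I_m -> nat) a b : a != b ->
  \sum_i f i = f a + f b + \sum_(i | (i != a) && (i != b)) f i.
Proof.
move=> ab; rewrite (bigD1 a) //= (bigD1 b) /=; last by rewrite eq_sym.
rewrite addnA; congr (_ + _); apply: eq_bigl => i; by rewrite andbC.
Qed.

Lemma sum3 (f : 'I_m -> nat) a b c : a != b -> a != c -> b != c ->
  \sum_i f i = f a + f b + f c + \sum_(i | [&& i != a, i != b & i != c]) f i.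
Proof.
move=> ab ac bc; rewrite (sum2 f ab) (bigD1 c) /=; last by apply/andP; split; rewrite eq_sym.
rewrite addnA; congr (_ + _); apply: eq_bigl => i; by rewrite andbA.
Qed.

Lemma off2 (u v : V) a b : a != b -> (forall i, i != a -> i != b -> co u i = co v i) ->
  co u a + co u b = co v a + co v b.
Proof.
move=> ab ho; move: (co_sum u) (co_sum v); rewrite (sum2 _ ab) (sum2 (co v) ab).
rewrite (eq_bigr (co v)); first by move=> <- /eqP; rewrite eqn_add2r => /eqP.
by move=> i /andP[]; exact: ho.
Qed.

Lemma off3 (f : 'I_m -> nat) (u : V) a b c : a != b -> a != c -> b != c ->
  (forall i, i != a -> i != b -> i != c -> f i = co u i) ->
  f a + f b + f c = co u a + co u b + co u c -> \sum_i f i = n.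
Proof.
move=> ab ac bc ho E; rewrite -(co_sum u) (sum3 f ab ac bc) (sum3 (co u) ab ac bc) E.
congr (_ + _); apply: eq_bigr => i /and3P[]; exact: ho.
Qed.

Lemma adj_irr (u : V) : ~~ sr_adj u u.
Proof. by rewrite /sr_adj adj_set; apply/negP => /eqP; rewrite (eq_card0 (A := _)) // => i; rewrite !inE eqxx. Qed.

Lemma adj_sym : symmetric (@sr_adj m n).
Proof. by move=> u v; rewrite /sr_adj; congr (_ == _); apply: eq_card => i; rewrite !inE eq_sym. Qed.

End VT.
Lemma swr_simple (T : finType) (e : rel T) (Cs : {set T}) :
  symmetric e -> irreflexive e -> simple_graph (swr e Cs).
Proof.
move=> es ei; split.
  move=> u v; rewrite /swr.
  case: (u \in Cs); case: (v \in Cs) => //=; by rewrite es.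
by move=> u; rewrite /swr; case: (u \in Cs) => /=; rewrite ei.
Qed.

Lemma noniso_of (T1 T2 : finType) (e1 : rel T1) (e2 : rel T2) (x y z1 z2 : T1) :
  x != y -> ~~ e1 x y -> e1 x z1 -> e1 y z1 -> e1 x z2 -> e1 y z2 -> e1 z1 z2 ->
  (forall z, e1 x z -> e1 y z -> z = z1 \/ z = z2) ->
  (forall x' y' z1' z2' : T2, x' != y' -> ~~ e2 x' y' -> e2 x' z1' -> e2 y' z1' ->
      e2 x' z2' -> e2 y' z2' -> e2 z1' z2' ->
      exists w, [/\ e2 x' w, e2 y' w, w != z1' & w != z2']) ->
  ~ graph_iso e1 e2.
Proof.
move=> xy nxy h1 h2 h3 h4 h5 ex H [f [[g fg gf] he]].
have fi : injective f by exact: can_inj fg.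
case: (H (f x) (f y) (f z1) (f z2)); rewrite ?he ?(inj_eq fi) //.
move=> w [w1 w2 w3 w4].
have : e1 x (g w) by rewrite -he gf.
have : e1 y (g w) by rewrite -he gf.
move=> a1 a2; case: (ex _ a2 a1) => E.
  by move: w3; rewrite -E gf eqxx.
by move: w4; rewrite -E gf eqxx.
Qed.

Lemma card_sub_img (T : finType) (g : 'I_4 -> T) (P : pred T) : injective g ->
  #|[set t in g @: [set: 'I_4] | P t]| = #|[set i | P (g i)]|.
Proof.
move=> gi; rewrite -(card_imset _ gi); apply: eq_card => t; rewrite !inE.
apply/andP/imsetP.
  by case=> /imsetP [i _ ->] Pt; exists i => //; rewrite inE.
by case=> i; rewrite inE => Pi ->; split => //; apply: imset_f.
Qed.

Lemma sum4 (F : 'I_4 -> nat) : \sum_i F i =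
  (F (@Ordinal 4 0 isT) + F (@Ordinal 4 1 isT) + F (@Ordinal 4 2 isT) + F (@Ordinal 4 3 isT))%N.
Proof.
rewrite !big_ord_recl big_ord0 addn0 !addnA.
by congr (_ + _ + _ + _); congr F; apply: val_inj.
Qed.

Lemma card4 (P : pred 'I_4) : #|[set i | P i]| =
  (P (@Ordinal 4 0 isT) + P (@Ordinal 4 1 isT) + P (@Ordinal 4 2 isT) + P (@Ordinal 4 3 isT))%N.
Proof.
rewrite -sum1_card big_mkcond /= sum4 !inE.
by case: (P (Ordinal _)); case: (P (Ordinal _)); case: (P (Ordinal _)); case: (P (Ordinal _)).
Qed.
Ltac ifs := repeat first [ progress (rewrite eqxx /=) | match goal with
  | H : is_true (?x != ?y) |- context [?x == ?y] => rewrite (negbTE H) /=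
  | H : is_true (?y != ?x) |- context [?x == ?y] => rewrite [x == y]eq_sym (negbTE H) /=
  end].

Ltac isplit := repeat first [progress ifs | match goal with
  | |- context [if ?i == ?j then _ else _] =>
      let E := fresh "E" in let ne := fresh "ne" in
      case: (eqVneq i j) => [E|ne]; [subst i|]
  end].

Section SR.
Variables m n : nat.
Local Notation V := (SRV m n).
Local Notation adj := (@sr_adj m n).

Lemma off3s (x u : V) a b c : a != b -> a != c -> b != c ->
  (forall i, i != a -> i != b -> i != c -> co x i = co u i) ->
  co x a + co x b + co x c = co u a + co u b + co u c.
Proof.
move=> ab ac bc ho; move: (co_sum x) (co_sum u).
rewrite (sum3 (co x) ab ac bc) (sum3 (co u) ab ac bc).
rewrite (eq_bigr (co u)); last by move=> i /and3P[]; exact: ho.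
by move=> E1 E2; move: (etrans E1 (esym E2)) => /eqP; rewrite eqn_add2r => /eqP.
Qed.

Lemma adj_at (u x : V) c : adj u x -> co u c != co x c ->
  exists d, [/\ d != c, co u d != co x d & forall i, i != c -> i != d -> co u i = co x i].
Proof.
case/adjP => p [q [pq hp hq ho]] hc.
case: (eqVneq c p) => [E|cp].
  by subst c; exists q; split => //; rewrite eq_sym.
case: (eqVneq c q) => [E|cq].
  subst c; exists p; split => // i i1 i2; exact: ho.
by move: (ho c cp cq) => /eqP; rewrite (negbTE hc).
Qed.

Lemma ne_sym (T : eqType) (x y : T) : x != y -> y != x.
Proof. by rewrite eq_sym. Qed.

Lemma vneq (x y : V) i : co x i != co y i -> x != y.
Proof. by apply: contraNneq => ->. Qed.

Definition clL (u v x : V) a b := [/\ co x a + co x b = co u a + co u b, co x a != co u a,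
  co x a != co v a & forall i, i != a -> i != b -> co x i = co u i].
Definition clP (u x : V) a b t c := [/\ (c != a) && (c != b), co x a = co u a, co x b = co u b + t,
  co x c + t = co u c & forall i, i != a -> i != b -> i != c -> co x i = co u i].
Definition clQ (u x : V) a b t c := [/\ (c != a) && (c != b), co x a + t = co u a, co x b = co u b,
  co x c = co u c + t & forall i, i != a -> i != b -> i != c -> co x i = co u i].

Section Edge.
Variables (u v : V) (a b : 'I_m) (t : nat).
Hypotheses (ab : a != b) (tp : 0 < t) (hva : co v a + t = co u a) (hvb : co v b = co u b + t)
  (hvo : forall i, i != a -> i != b -> co v i = co u i).

Lemma cls (x : V) : adj u x -> adj v x ->
  clL u v x a b \/ (exists c, clP u x a b t c) \/ (exists c, clQ u x a b t c).
Proof.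
move=> ux vx.
case: (boolP [exists c, [&& c != a, c != b & co x c != co u c]]); last first.
  move/existsPn => H.
  have ho : forall i, i != a -> i != b -> co x i = co u i.
    by move=> i ia ib; move: (H i); rewrite ia ib /= negbK => /eqP.
  left; split => //.
  - by apply: off2.
  - apply/negP => /eqP E; move: ux; suff -> : u = x by rewrite (negbTE (adj_irr _)).
    have := off2 ab ho; rewrite E => /eqP; rewrite eqn_add2l => /eqP E2.
    apply: vext => i; case: (eqVneq i a) => [->//|ia]; case: (eqVneq i b) => [->//|ib].
    by rewrite ho.
  - apply/negP => /eqP E; move: vx; suff -> : v = x by rewrite (negbTE (adj_irr _)).
    have ho' : forall i, i != a -> i != b -> co x i = co v i by move=> i ia ib; rewrite ho // hvo.
    have := off2 ab ho'; rewrite E => /eqP; rewrite eqn_add2l => /eqP E2.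
    apply: vext => i; case: (eqVneq i a) => [->//|ia]; case: (eqVneq i b) => [->//|ib].
    by rewrite ho'.
case/existsP => c /and3P [ca cb xc].
have uc : co u c != co x c by rewrite eq_sym.
have vc : co v c != co x c by rewrite hvo // eq_sym.
case: (adj_at ux uc) => d [dc ud hu].
case: (adj_at vx vc) => d' [dc' vd hv].
have ba : b != a by rewrite eq_sym.
case: (eqVneq a d) => [E|ad].
  subst d.
  have xb : co x b = co u b by rewrite -hu // ne_sym.
  have bd' : b = d'.
    apply/eqP; apply/negPn/negP => bd'; move: (hv b (ne_sym cb) bd').
    rewrite xb hvb; lia.
  subst d'.
  have xa : co x a = co v a by rewrite -hv // ne_sym.
  have hoi : forall i, i != a -> i != b -> i != c -> co x i = co u i.
    by move=> i ia ib ic; rewrite -hu.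
  have := off3s ab (ne_sym ca) (ne_sym cb) hoi.
  right; right; exists c; split => //; [by rewrite ca cb | by rewrite xa hva | lia].
have xa : co x a = co u a by rewrite -hu // ne_sym.
have ad' : a = d'.
  apply/eqP; apply/negPn/negP => ad'; move: (hv a (ne_sym ca) ad').
  rewrite xa -hva; lia.
subst d'.
have xb : co x b = co v b by rewrite -hv // ne_sym.
have hoi : forall i, i != a -> i != b -> i != c -> co x i = co u i.
  by move=> i ia ib ic; rewrite -hv // hvo.
have := off3s ab (ne_sym ca) (ne_sym cb) hoi.
right; left; exists c; split => //; [by rewrite ca cb | by rewrite xb hvb | lia].
Qed.
End Edge.
End SR.
Section SR2.
Variables m n : nat.
Local Notation V := (SRV m n).
Local Notation adj := (@sr_adj m n).
Variables (u v : V) (a b : 'I_m) (t : nat).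
Hypotheses (ab : a != b) (tp : 0 < t) (hva : co v a + t = co u a) (hvb : co v b = co u b + t)
  (hvo : forall i, i != a -> i != b -> co v i = co u i).

Ltac fin := rewrite ?co_mkV; isplit; try done;
  try (match goal with H : is_true (?x != ?x) |- _ => by rewrite eqxx in H end); try lia.

Lemma wPQ (x y : V) c : clP u x a b t c -> clQ u y a b t c ->
  exists w, [/\ adj x w, adj y w, w != u & w != v].
Proof.
case=> /andP[ca cb] xa xb xc xo; case=> _ ya yb yc yo.
pose f i := if i == a then co u a - t else if i == b then co u b + t + t
  else if i == c then co u c - t else co u i.
have H : \sum_i f i = n.
  apply: (off3 (u := u) ab (ne_sym ca) (ne_sym cb)); rewrite /f.
    by move=> i ia ib ic; fin.
  fin.
exists (mkV H); split.
- apply: (@adjI m n x _ a b) => //; rewrite /f; fin.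
  move=> i ia ib; fin; by rewrite xo // ne_sym.
- apply: (@adjI m n y _ b c) => //; rewrite /f; fin.
  move=> i ib ic; fin; by rewrite yo // ne_sym.
- apply: (vneq (i := b)); rewrite /f; fin.
- apply: (vneq (i := b)); rewrite /f; fin.
Qed.

Lemma wPQ2 (x y : V) c c' : clP u x a b t c -> clQ u y a b t c' -> c != c' ->
  exists w, [/\ adj x w, adj y w, w != u & w != v].
Proof.
case=> /andP[ca cb] xa xb xc xo; case=> /andP[ca' cb'] ya yb yc yo cc'.
have xc' : co x c' = co u c' by rewrite xo // ne_sym.
have yc0 : co y c = co u c by rewrite yo.
have vc : co v c = co u c by rewrite hvo.
pose f i := if i == a then co u a else if i == b then co u b else if i == c then co u c - t else if i == c' then co u c' + t else co u i.
have H : \sum_i f i = n.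
  apply: (off3 (u := u) (ne_sym ca) (ne_sym ca') cc'); rewrite /f.
    by move=> i ia ic ic'; fin.
  fin.
exists (mkV H); split.
- apply: (@adjI m n x _ b c') => //; rewrite /f; fin.
  move=> i ib ic'; fin; by rewrite xo // ne_sym.
- apply: (@adjI m n y _ a c) => //; rewrite /f; fin.
  move=> i ia ic; fin; by rewrite yo // ne_sym.
- apply: (vneq (i := c)); rewrite /f; fin.
- apply: (vneq (i := c)); rewrite /f; fin.
Qed.

Lemma wLP (x y : V) c : clL u v x a b -> clP u y a b t c ->
  exists w, [/\ adj x w, adj y w, w != u & w != v].
Proof.
case=> xs xa xav xo; case=> /andP[ca cb] ya yb yc yo.
have xc : co x c = co u c by rewrite xo.
have vc : co v c = co u c by rewrite hvo.
pose f i := if i == a then co x a else if i == b then co x b + t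
  else if i == c then co u c - t else co u i.
have H : \sum_i f i = n.
  apply: (off3 (u := u) ab (ne_sym ca) (ne_sym cb)); rewrite /f.
    by move=> i ia ib ic; fin.
  fin.
exists (mkV H); split.
- apply: (@adjI m n x _ b c) => //; rewrite /f; fin.
  move=> i ib ic; fin; by rewrite xo // ne_sym.
- apply: (@adjI m n y _ a b) => //; rewrite /f; fin.
  move=> i ia ib; fin; by rewrite yo // ne_sym.
- apply: (vneq (i := c)); rewrite /f; fin.
- apply: (vneq (i := c)); rewrite /f; fin.
Qed.

Lemma wLQ (x y : V) c : clL u v x a b -> clQ u y a b t c ->
  exists w, [/\ adj x w, adj y w, w != u & w != v].
Proof.
case=> xs xa xav xo; case=> /andP[ca cb] ya yb yc yo.
have xc : co x c = co u c by rewrite xo.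
have vc : co v c = co u c by rewrite hvo.
case: (ltnP (co x a) t) => ht.
  pose f i := if i == a then co x a else if i == b then co u b
    else if i == c then co u c + co u a - co x a else co u i.
  have H : \sum_i f i = n.
    apply: (off3 (u := u) ab (ne_sym ca) (ne_sym cb)); rewrite /f.
      by move=> i ia ib ic; fin.
    fin.
  exists (mkV H); split.
  - apply: (@adjI m n x _ b c) => //; rewrite /f; fin.
    move=> i ib ic; fin; by rewrite xo // ne_sym.
  - apply: (@adjI m n y _ a c) => //; rewrite /f; fin.
    move=> i ia ic; fin; by rewrite yo // ne_sym.
  - apply: (vneq (i := c)); rewrite /f; fin.
  - apply: (vneq (i := c)); rewrite /f; fin.
pose f i := if i == a then co x a - t else if i == b then co x b
  else if i == c then co u c + t else co u i.
have H : \sum_i f i = n.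
  apply: (off3 (u := u) ab (ne_sym ca) (ne_sym cb)); rewrite /f.
    by move=> i ia ib ic; fin.
  fin.
exists (mkV H); split.
- apply: (@adjI m n x _ a c) => //; rewrite /f; fin.
  move=> i ia ic; fin; by rewrite xo // ne_sym.
- apply: (@adjI m n y _ a b) => //; rewrite /f; fin.
  move=> i ia ib; fin; by rewrite yo // ne_sym.
- apply: (vneq (i := c)); rewrite /f; fin.
- apply: (vneq (i := c)); rewrite /f; fin.
Qed.

Lemma cLL (x y : V) : clL u v x a b -> clL u v y a b -> x != y -> adj x y.
Proof.
case=> xs xa xav xo; case=> ys ya yav yo xy.
have hd : co x a != co y a.
  apply/negP => /eqP E; move/negP: xy; apply; apply/eqP; apply: vext => i.
  case: (eqVneq i a) => [->//|ia]; case: (eqVneq i b) => [->|ib]; first lia.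
  by rewrite xo // yo.
apply: (@adjI m n x y a b) => //; first lia.
by move=> i ia ib; rewrite xo // yo.
Qed.

Lemma cPP (x y : V) c c' : clP u x a b t c -> clP u y a b t c' -> x != y -> adj x y.
Proof.
case=> /andP[ca cb] xa xb xc xo; case=> /andP[ca' cb'] ya yb yc yo xy.
case: (eqVneq c c') => [E|cc'].
  subst c'; move/negP: xy; case; apply/eqP; apply: vext => i.
  case: (eqVneq i a) => [->|ia]; first lia; case: (eqVneq i b) => [->|ib]; first lia.
  case: (eqVneq i c) => [->|ic]; first lia.
  by rewrite xo // yo.
have xc' : co x c' = co u c' by rewrite xo // ne_sym.
have yc0 : co y c = co u c by rewrite yo.
apply: (@adjI m n x y c c') => //; try lia.
move=> i ic ic'; case: (eqVneq i a) => [->|ia]; first lia; case: (eqVneq i b) => [->|ib]; first lia.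
by rewrite xo // yo.
Qed.

Lemma cQQ (x y : V) c c' : clQ u x a b t c -> clQ u y a b t c' -> x != y -> adj x y.
Proof.
case=> /andP[ca cb] xa xb xc xo; case=> /andP[ca' cb'] ya yb yc yo xy.
case: (eqVneq c c') => [E|cc'].
  subst c'; move/negP: xy; case; apply/eqP; apply: vext => i.
  case: (eqVneq i a) => [->|ia]; first lia; case: (eqVneq i b) => [->|ib]; first lia.
  case: (eqVneq i c) => [->|ic]; first lia.
  by rewrite xo // yo.
have xc' : co x c' = co u c' by rewrite xo // ne_sym.
have yc0 : co y c = co u c by rewrite yo.
apply: (@adjI m n x y c c') => //; try lia.
move=> i ic ic'; case: (eqVneq i a) => [->|ia]; first lia; case: (eqVneq i b) => [->|ib]; first lia.
by rewrite xo // yo.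
Qed.

Lemma edge_main (x y : V) : x != y -> ~~ adj x y -> adj u x -> adj v x -> adj u y -> adj v y ->
  exists w, [/\ adj x w, adj y w, w != u & w != v].
Proof.
move=> xy nxy ux vx uy vy.
have sw : (exists w, [/\ adj y w, adj x w, w != u & w != v]) ->
          exists w, [/\ adj x w, adj y w, w != u & w != v].
  by case=> w [h1 h2 h3 h4]; exists w.
have yx : y != x by rewrite eq_sym.
have C := cls ab tp hva hvb hvo.
case: (C x ux vx) => [Lx|[[c Px]|[c Qx]]]; case: (C y uy vy) => [Ly|[[c' Py]|[c' Qy]]].
- by rewrite (cLL Lx Ly xy) in nxy.
- exact: wLP Lx Py.
- exact: wLQ Lx Qy.
- by apply: sw; exact: wLP Ly Px.
- by rewrite (cPP Px Py xy) in nxy.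
- case: (eqVneq c c') => [E|cc']; first by subst c'; exact: wPQ Px Qy.
  exact: wPQ2 Px Qy cc'.
- by apply: sw; exact: wLQ Ly Qx.
- apply: sw; case: (eqVneq c' c) => [E|cc']; first by subst c'; exact: wPQ Py Qx.
  exact: wPQ2 Py Qx cc'.
- by rewrite (cQQ Qx Qy xy) in nxy.
Qed.
End SR2.

Lemma sr_pattern m n (x y z1 z2 : SRV m n) : x != y -> ~~ sr_adj x y ->
  sr_adj x z1 -> sr_adj y z1 -> sr_adj x z2 -> sr_adj y z2 -> sr_adj z1 z2 ->
  exists w, [/\ sr_adj x w, sr_adj y w, w != z1 & w != z2].
Proof.
move=> xy nxy xz1 yz1 xz2 yz2 /adjP [a [b [ab ha hb ho]]].
have hs := off2 ab ho.
have sym := @adj_sym m n.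
wlog lt : a b ab ha hb ho hs / co z2 a < co z1 a.
  move=> W; case: (ltnP (co z2 a) (co z1 a)) => h; first exact: (W a b).
  apply: (W b a) => //; try by rewrite eq_sym.
  - by move=> i ib ia; exact: ho.
  - lia.
  - have : co z2 a != co z1 a by rewrite eq_sym.
    lia.
have hvo : forall i, i != a -> i != b -> co z2 i = co z1 i by move=> i ia ib; rewrite ho.
have tp : 0 < co z1 a - co z2 a by lia.
have hva : co z2 a + (co z1 a - co z2 a) = co z1 a by lia.
have hvb : co z2 b = co z1 b + (co z1 a - co z2 a) by lia.
by apply: (edge_main ab tp hva hvb hvo) => //; rewrite sym.
Qed.

Lemma co_full m n (v : SRV m n) k : co v k = n -> forall j, j != k -> co v j = 0.
Proof.
move=> hk j jk; have := co_sum v; rewrite (bigD1 k) //= hk => E.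
have : \sum_(i < m | i != k) co v i == 0.
  by move: E; set s := \sum_(i < m | _) _; move=> E; apply/eqP; lia.
rewrite sum_nat_eq0 => /forallP /(_ j).
by rewrite jk => /implyP /(_ isT) /eqP.
Qed.

Ltac bsplit := repeat (match goal with |- context [?x == ?y] => case: (x =P y) => ? end); simpl; lia.

Section CaseA.
Variable n : nat.
Hypothesis n3 : 3 <= n.
Local Notation V := (SRV 4 n).
Local Notation adj := (@sr_adj 4 n).
Definition i0 : 'I_4 := @Ordinal 4 0 isT.
Definition i1 : 'I_4 := @Ordinal 4 1 isT.
Definition i2 : 'I_4 := @Ordinal 4 2 isT.
Definition i3 : 'I_4 := @Ordinal 4 3 isT.

Lemma adj4 (u v : V) : adj u v = (((co u i0 != co v i0) + (co u i1 != co v i1) +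
  (co u i2 != co v i2) + (co u i3 != co v i3)) == 2).
Proof. by rewrite /sr_adj adj_set card4. Qed.

Lemma sumv4 (v : V) : co v i0 + co v i1 + co v i2 + co v i3 = n.
Proof. by have := co_sum v; rewrite sum4. Qed.

Lemma vext4 (u v : V) : co u i0 = co v i0 -> co u i1 = co v i1 -> co u i2 = co v i2 ->
  co u i3 = co v i3 -> u = v.
Proof.
move=> h0 h1 h2 h3; apply: vext => -[[|[|[|[|k]]]] Hk] //.
- by rewrite (_ : Ordinal Hk = i0) //; apply: val_inj.
- by rewrite (_ : Ordinal Hk = i1) //; apply: val_inj.
- by rewrite (_ : Ordinal Hk = i2) //; apply: val_inj.
- by rewrite (_ : Ordinal Hk = i3) //; apply: val_inj.
Qed.

Lemma mk4_sum a b c d : a + b + c + d = n -> \sum_(j < 4) nth 0 [:: a; b; c; d] j = n.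
Proof. by rewrite sum4. Qed.

Definition mk4 a b c d (H : a + b + c + d = n) : V := mkV (mk4_sum H).

Lemma co_mk40 a b c d (H : a + b + c + d = n) : co (mk4 H) i0 = a.
Proof. by rewrite /mk4 !co_mkV. Qed.
Lemma co_mk41 a b c d (H : a + b + c + d = n) : co (mk4 H) i1 = b.
Proof. by rewrite /mk4 !co_mkV. Qed.
Lemma co_mk42 a b c d (H : a + b + c + d = n) : co (mk4 H) i2 = c.
Proof. by rewrite /mk4 !co_mkV. Qed.
Lemma co_mk43 a b c d (H : a + b + c + d = n) : co (mk4 H) i3 = d.
Proof. by rewrite /mk4 !co_mkV. Qed.

Lemma gA_sum (i : 'I_4) : \sum_(j < 4) (if j == i then n else 0) = n.
Proof. by rewrite (bigD1 i) //= eqxx big1 ?addn0 // => j /negbTE ->. Qed.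

Definition gA (i : 'I_4) : V := mkV (gA_sum i).

Lemma co_gA i j : co (gA i) j = if j == i then n else 0.
Proof. by rewrite co_mkV. Qed.

Lemma gA_inj : injective gA.
Proof.
move=> i j E; move: (co_gA i i); rewrite E co_gA eqxx.
by case: (i =P j) => // _; lia.
Qed.

Definition CsA : {set V} := gA @: [set: 'I_4].

Lemma notC_co (w : V) k : w \notin CsA -> co w k != n.
Proof.
move=> wC; apply/negP => /eqP hk; move/negP: wC; apply.
have -> : w = gA k.
  apply: vext => j; rewrite co_gA; case: (eqVneq j k) => [->//|jk].
  exact: co_full hk j jk.
by apply: imset_f.
Qed.

Definition nz (w : V) := ((co w i0 != 0) + (co w i1 != 0) + (co w i2 != 0) + (co w i3 != 0))%N.

Lemma cntA (w : V) : w \notin CsA -> cntN adj CsA w = ((nz w == 2) * 2)%N.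
Proof.
move=> wC; rewrite /cntN card_sub_img; last exact: gA_inj.
rewrite card4 !adj4 !co_gA /nz /=.
have := notC_co i0 wC; have := notC_co i1 wC; have := notC_co i2 wC; have := notC_co i3 wC.
have := sumv4 w.
move: (co w i0) (co w i1) (co w i2) (co w i3) => a b c d.
move=> S h3 h2 h1 h0; rewrite (negbTE h0) (negbTE h1) (negbTE h2) (negbTE h3) /=.
case: (a =P 0); case: (b =P 0); case: (c =P 0); case: (d =P 0) => /= *; lia.
Qed.

End CaseA.

Ltac vsplit := repeat (match goal with |- context [?x == ?y] => is_var x; case: (x =P y) => ? end); simpl.

Section CaseA2.
Variable n : nat.
Hypothesis n3 : 3 <= n.
Local Notation V := (SRV 4 n).
Local Notation adj := (@sr_adj 4 n).
Local Notation sw := (swr (@sr_adj 4 n) (CsA n)).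

Lemma ord4_cases (j : 'I_4) : [\/ j = i0, j = i1, j = i2 | j = i3].
Proof.
case: j => -[|[|[|[|k]]]] Hk //.
- by constructor 1; apply: val_inj.
- by constructor 2; apply: val_inj.
- by constructor 3; apply: val_inj.
- by constructor 4; apply: val_inj.
Qed.

Lemma inCA (w : V) : w \in CsA n -> [|| co w i0 == n, co w i1 == n, co w i2 == n | co w i3 == n].
Proof.
case/imsetP => j _ ->; rewrite !co_gA.
by case: (ord4_cases j) => ->; rewrite /= eqxx ?orbT.
Qed.

Lemma yA_sum : 0 + 1 + 1 + (n - 2) = n. Proof. lia. Qed.
Lemma z1A_sum : 0 + 1 + (n - 1) + 0 = n. Proof. lia. Qed.
Lemma z2A_sum : 0 + (n - 1) + 1 + 0 = n. Proof. lia. Qed.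
Definition xA := gA n i3.
Definition yA := mk4 yA_sum.
Definition z1A := mk4 z1A_sum.
Definition z2A := mk4 z2A_sum.

Lemma notinC4 (w : V) : co w i0 != n -> co w i1 != n -> co w i2 != n -> co w i3 != n ->
  w \notin CsA n.
Proof.
move=> h0 h1 h2 h3; apply/negP => /inCA.
by rewrite (negbTE h0) (negbTE h1) (negbTE h2) (negbTE h3).
Qed.

Ltac co4 := rewrite ?co_mk40 ?co_mk41 ?co_mk42 ?co_mk43 ?co_gA /=.

Lemma xA_in : xA \in CsA n. Proof. exact: imset_f. Qed.
Lemma yA_out : yA \notin CsA n. Proof. apply: notinC4; rewrite /yA; co4; apply/eqP; lia. Qed.
Lemma z1A_out : z1A \notin CsA n. Proof. apply: notinC4; rewrite /z1A; co4; apply/eqP; lia. Qed.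
Lemma z2A_out : z2A \notin CsA n. Proof. apply: notinC4; rewrite /z2A; co4; apply/eqP; lia. Qed.

Lemma eq2 (b : bool) : ((b * 2)%N == 2) = b. Proof. by case: b. Qed.

Lemma swA_out (u v : V) : u \notin CsA n -> v \notin CsA n -> sw u v = adj u v.
Proof. by move=> /negbTE hu /negbTE hv; rewrite /swr hu hv. Qed.

Lemma swA_io (u v : V) : u \in CsA n -> v \notin CsA n -> sw u v = adj v u (+) (nz v == 2).
Proof. by move=> hu hv; rewrite /swr hu hv /= cntA // eq2 adj_sym. Qed.

Lemma cntyA : (nz yA == 2) = false.
Proof. rewrite /nz /yA; co4; have -> : (n - 2 == 0) = false by apply/eqP; lia. by []. Qed.

Lemma witA : (xA != yA) /\ (~~ sw xA yA) /\ (sw xA z1A) /\ (sw yA z1A) /\ (sw xA z2A) /\ (sw yA z2A) /\ (sw z1A z2A).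
Proof.
have Y := yA_out; have Z1 := z1A_out; have Z2 := z2A_out; have X := xA_in.
split; [|split; [|split; [|split; [|split; [|split]]]]].
- apply: (vneq (i := i3)); rewrite /xA /yA; co4; apply/eqP; lia.
- rewrite swA_io // adj4 cntyA /xA /yA; co4.
  have -> : (n - 2 == n) = false by apply/eqP; lia.
  by [].
- rewrite swA_io // adj4 /nz /xA /z1A; co4; vsplit; lia.
- rewrite swA_out // adj4 /yA /z1A; co4; vsplit; lia.
- rewrite swA_io // adj4 /nz /xA /z2A; co4; vsplit; lia.
- rewrite swA_out // adj4 /yA /z2A; co4; vsplit; lia.
- rewrite swA_out // adj4 /z1A /z2A; co4; vsplit; lia.
Qed.

Lemma exactA (z : V) : sw xA z -> sw yA z -> z = z1A \/ z = z2A.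
Proof.
have Y := yA_out; have X := xA_in.
case: (boolP (z \in CsA n)) => zC.
  move=> _; rewrite /swr (negbTE Y) zC /= -/(cntN _ _ _) cntA // eq2 cntyA addbF.
  case/imsetP: zC => j _ ->; rewrite adj4 /yA; co4.
  by case: (ord4_cases j) => ->; co4; vsplit; lia.
rewrite swA_io // swA_out // !adj4 /nz /xA /yA; co4.
move: (sumv4 z) (notC_co i0 zC) (notC_co i1 zC) (notC_co i2 zC) (notC_co i3 zC).
move E0: (co z i0) => a; move E1: (co z i1) => b; move E2: (co z i2) => c; move E3: (co z i3) => d.
move=> S h0 h1 h2 h3 H1 H2.
suff key : (a = 0 /\ b = 1 /\ c = n - 1 /\ d = 0) \/ (a = 0 /\ b = n - 1 /\ c = 1 /\ d = 0).
  case: key => [[ha [hb [hc hd]]]|[ha [hb [hc hd]]]]; [left|right]; apply: vext4;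
    rewrite ?co_mk40 ?co_mk41 ?co_mk42 ?co_mk43 ?E0 ?E1 ?E2 ?E3 //.
clear E0 E1 E2 E3 X Y zC; move: H1 H2.
rewrite (negbTE h3).
case: (d =P 0) => [d0|dn]; last by rewrite addbb.
subst d.
have n2 : (n - 2 == 0) = false by apply/eqP; clear -n3; lia.
rewrite n2 /= ![0 == _]eq_sym ![1 == _]eq_sym.
clear -S n3 h0 h1 h2; vsplit; lia.
Qed.
End CaseA2.

Lemma not_adj1 m n (u v : SRV m n) p : (forall i, i != p -> co u i = co v i) -> ~~ sr_adj u v.
Proof.
move=> H; apply/negP => /adjP [a [b [ab ha hb ho]]].
case: (eqVneq a p) => [E|ap]; last by move: ha; rewrite H // eqxx.
by subst a; move: hb; rewrite H ?eqxx // eq_sym.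
Qed.

Lemma exists_pos m (P : pred 'I_m) (f : 'I_m -> nat) : 0 < \sum_(i | P i) f i ->
  exists i, P i /\ 0 < f i.
Proof.
move=> H; case: (boolP [exists i, P i && (0 < f i)]).
  by case/existsP => i /andP [] *; exists i.
move/existsPn => N; move: H; rewrite lt0n sum_nat_eq0; case/negP.
apply/forallP => i; apply/implyP => Pi; move: (N i); rewrite Pi /=.
by rewrite lt0n negbK.
Qed.

Section CaseB.
Variable m : nat.
Hypothesis hm : 3 < m.
Local Notation V := (SRV m 3).
Local Notation adj := (@sr_adj m 3).

Definition p0 : 'I_m := Ordinal (ltn_trans (isT : 0 < 3) hm).
Definition p1 : 'I_m := Ordinal (ltn_trans (isT : 1 < 3) hm).
Definition p2 : 'I_m := Ordinal (ltn_trans (isT : 2 < 3) hm).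
Definition p3 : 'I_m := Ordinal hm.
Lemma p01 : p0 != p1. Proof. by []. Qed.
Lemma p02 : p0 != p2. Proof. by []. Qed.
Lemma p03 : p0 != p3. Proof. by []. Qed.
Lemma p12 : p1 != p2. Proof. by []. Qed.
Lemma p13 : p1 != p3. Proof. by []. Qed.
Lemma p23 : p2 != p3. Proof. by []. Qed.

Ltac pne := have := p01; have := p02; have := p03; have := p12; have := p13; have := p23;
  move=> ? ? ? ? ? ?.

Lemma gB_sum (k : 'I_4) : \sum_i (if i == p0 then val k else if i == p1 then 3 - val k else 0) = 3.
Proof.
rewrite (sum2 _ p01) eqxx (negbTE (ne_sym p01)) eqxx big1 ?addn0.
  by case: k => -[|[|[|[|]]]].
by move=> i /andP [/negbTE -> /negbTE ->].
Qed.

Definition gB (k : 'I_4) : V := mkV (gB_sum k).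

Lemma co_gB k i : co (gB k) i = if i == p0 then val k else if i == p1 then 3 - val k else 0.
Proof. by rewrite co_mkV. Qed.

Lemma gB_inj : injective gB.
Proof.
move=> k k' E; apply: val_inj; move: (co_gB k p0); rewrite E co_gB eqxx.
by move=> ->.
Qed.

Definition CsB : {set V} := gB @: [set: 'I_4].

Lemma inCB (w : V) : w \in CsB -> co w p0 + co w p1 = 3.
Proof.
case/imsetP => k _ ->; rewrite !co_gB eqxx (negbTE (ne_sym p01)) eqxx.
by case: k => -[|[|[|[|]]]].
Qed.

Lemma notCB (w : V) j : j != p0 -> j != p1 -> co w j != 0 -> w \notin CsB.
Proof.
move=> j0 j1 hj; apply/negP => /inCB H.
move: (co_sum w); rewrite (sum2 _ p01) H (bigD1 j) /=; last by rewrite j0 j1.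
by move: hj; case: (co w j) => // x _; lia.
Qed.

Lemma gB_clique s t : s \in CsB -> t \in CsB -> s != t -> adj s t.
Proof.
case/imsetP => k _ ->; case/imsetP => k' _ -> ne.
have kk : val k != val k' by apply: contraNneq ne => E; rewrite (val_inj E).
clear ne; apply: (@adjI m 3 _ _ p0 p1 p01); rewrite ?co_gB ?eqxx ?(negbTE (ne_sym p01)) //.
  by move: kk; case: k => -[|[|[|[|]]]] ?; case: k' => -[|[|[|[|]]]] ?.
by move=> i /negbTE i0 /negbTE i1; rewrite !co_gB i0 i1.
Qed.

Lemma clsB (z : V) : z \notin CsB -> exists j, [/\ (j != p0) && (j != p1), 0 < co z j &
  (forall i, i != p0 -> i != p1 -> i != j -> co z i = 0) \/
  (exists j', [&& j' != p0, j' != p1, j' != j & co z j' != 0])].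
Proof.
move=> zC.
have S := co_sum z; rewrite (sum2 _ p01) in S.
have : 0 < \sum_(i | (i != p0) && (i != p1)) co z i.
  rewrite lt0n; apply/negP => /eqP E; move/negP: zC; apply.
  have hs : co z p0 + co z p1 = 3 by lia.
  have zb : co z p0 < 4 by lia.
  have -> : z = gB (Ordinal zb); last by apply: imset_f.
  apply: vext => i; rewrite co_gB /=.
  case: (eqVneq i p0) => [->//|i0]; case: (eqVneq i p1) => [->|i1]; first lia.
  move/eqP: E; rewrite sum_nat_eq0 => /forallP /(_ i); rewrite i0 i1 /=.
  by move/eqP.
case/exists_pos => j [j01 jpos]; exists j; split => //.
case: (boolP [exists j', [&& j' != p0, j' != p1, j' != j & co z j' != 0]]).
  by case/existsP => j' H; right; exists j'.
move/existsPn => N; left => i i0 i1 ij; move: (N i); rewrite i0 i1 ij /= negbK.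
by move/eqP.
Qed.

Lemma single_co (z : V) j : j != p0 -> j != p1 ->
  (forall i, i != p0 -> i != p1 -> i != j -> co z i = 0) -> co z p0 + co z p1 + co z j = 3.
Proof.
move=> j0 j1 H; have := co_sum z; rewrite (sum3 _ p01 (ne_sym j0) (ne_sym j1)) big1 ?addn0 //.
by move=> i /and3P[]; exact: H.
Qed.

Lemma cntB_single (z : V) j : j != p0 -> j != p1 -> 0 < co z j ->
  (forall i, i != p0 -> i != p1 -> i != j -> co z i = 0) -> cntN adj CsB z = 2.
Proof.
move=> j0 j1 jp H; have S := single_co j0 j1 H.
rewrite /cntN card_sub_img; last exact: gB_inj.
have key : forall k : 'I_4, adj z (gB k) = ((co z p0 != val k) + (co z p1 != 3 - val k) == 1).
  move=> k.
  have gj : co (gB k) j = 0 by rewrite co_gB (negbTE j0) (negbTE j1).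
  have zj : co z j != co (gB k) j by rewrite gj -lt0n.
  have g0 : co (gB k) p0 = val k by rewrite co_gB eqxx.
  have g1 : co (gB k) p1 = 3 - val k by rewrite co_gB (negbTE (ne_sym p01)) eqxx.
  have ho : forall i, i != p0 -> i != p1 -> i != j -> co z i = co (gB k) i.
    by move=> i i0 i1 ij; rewrite H // co_gB (negbTE i0) (negbTE i1).
  case: (eqVneq (co z p0) (val k)) => e0; case: (eqVneq (co z p1) (3 - val k)) => e1 /=.
  - apply/negbTE/(not_adj1 (p := j)) => i ij.
    case: (eqVneq i p0) => [->|i0]; first by rewrite g0.
    case: (eqVneq i p1) => [->|i1]; first by rewrite g1.
    exact: ho.
  - apply: (@adjI m 3 _ _ p1 j (ne_sym j1)); rewrite ?g1 // => i i1 ij.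
    case: (eqVneq i p0) => [->|i0]; first by rewrite g0.
    exact: ho.
  - apply: (@adjI m 3 _ _ p0 j (ne_sym j0)); rewrite ?g0 // => i i0 ij.
    case: (eqVneq i p1) => [->|i1]; first by rewrite g1.
    exact: ho.
  - by apply/negbTE; apply: (not_adj3 p01 (ne_sym j0) (ne_sym j1)); rewrite ?g0 ?g1.
rewrite card4 !key /=.
have : co z p0 + co z p1 < 3 by lia.
move: (co z p0) (co z p1) => a b hab; vsplit; lia.
Qed.

Lemma cntB_multi (z : V) j j' : j != p0 -> j != p1 -> 0 < co z j ->
  j' != p0 -> j' != p1 -> j' != j -> co z j' != 0 -> cntN adj CsB z = 0.
Proof.
move=> j0 j1 jp j'0 j'1 j'j j'p.
apply/eqP; rewrite cards_eq0; apply/eqP/setP => t; rewrite !inE.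
apply/negbTE; apply/negP => /andP [/imsetP [k _ ->]].
have gj : forall i, i != p0 -> i != p1 -> co (gB k) i = 0.
  by move=> i i0 i1; rewrite co_gB (negbTE i0) (negbTE i1).
have S := co_sum z; rewrite (sum3 _ p01 (ne_sym j0) (ne_sym j1)) (bigD1 j') /= in S; last first.
  by rewrite j'0 j'1 j'j.
have zj : co z j != co (gB k) j by rewrite gj // -lt0n.
have zj' : co z j' != co (gB k) j' by rewrite gj.
case: (eqVneq (co z p0) (co (gB k) p0)) => e0.
  have e1 : co z p1 != co (gB k) p1.
    move: e0; rewrite !co_gB eqxx (negbTE (ne_sym p01)) eqxx => e0.
    by apply/eqP => e1; move: j'p; rewrite -lt0n => j'p; lia.
  by apply/negP; apply: (not_adj3 (ne_sym j1) (ne_sym j'1) (ne_sym j'j)).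
by apply/negP; apply: (not_adj3 (ne_sym j0) (ne_sym j'0) (ne_sym j'j)).
Qed.

Lemma CoutB (w : V) : w \notin CsB -> cntN adj CsB w = 0 \/ cntN adj CsB w = 2.
Proof.
move=> wC; case: (clsB wC) => j [/andP [j0 j1] jp [H|[j' /and4P [a1 a2 a3 a4]]]].
  by right; exact: (cntB_single j0 j1 jp H).
by left; exact: (cntB_multi j0 j1 jp a1 a2 a3 a4).
Qed.

End CaseB.

Lemma swr_out (T : finType) (e : rel T) (Cs : {set T}) (u v : T) : u \notin Cs -> v \notin Cs -> swr e Cs u v = e u v.
Proof. by move=> /negbTE hu /negbTE hv; rewrite /swr hu hv. Qed.
Lemma swr_io (T : finType) (e : rel T) (Cs : {set T}) (u v : T) : u \in Cs -> v \notin Cs ->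
  swr e Cs u v = e u v (+) (cntN e Cs v == 2).
Proof. by move=> hu hv; rewrite /swr hu hv. Qed.
Lemma swr_oi (T : finType) (e : rel T) (Cs : {set T}) (u v : T) : u \notin Cs -> v \in Cs ->
  swr e Cs u v = e u v (+) (cntN e Cs u == 2).
Proof. by move=> hu hv; rewrite /swr hu hv /= andbF. Qed.

Section CaseB2.
Variable m : nat.
Hypothesis hm : 3 < m.
Local Notation V := (SRV m 3).
Local Notation adj := (@sr_adj m 3).
Local Notation sw := (swr (@sr_adj m 3) (CsB hm)).
Local Notation p0 := (p0 hm). Local Notation p1 := (p1 hm).
Local Notation p2 := (p2 hm). Local Notation p3 := (p3 hm).

Definition f3 (q1 q2 q3 : 'I_m) (a b c : nat) i :=
  if i == q1 then a else if i == q2 then b else if i == q3 then c else 0.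

Lemma f3_sum q1 q2 q3 a b c : q1 != q2 -> q1 != q3 -> q2 != q3 -> a + b + c = 3 ->
  \sum_i f3 q1 q2 q3 a b c i = 3.
Proof.
move=> h12 h13 h23 S; rewrite (sum3 _ h12 h13 h23) /f3 big1 ?addn0.
  by rewrite eqxx (negbTE (ne_sym h12)) eqxx (negbTE (ne_sym h13)) (negbTE (ne_sym h23)) eqxx.
by move=> i /and3P [/negbTE -> /negbTE -> /negbTE ->].
Qed.

Definition k3 : 'I_4 := @Ordinal 4 3 isT.
Definition xB : V := gB hm k3.
Definition yB : V := mkV (@f3_sum p0 p2 p3 1 1 1 (p02 hm) (p03 hm) (p23 hm) erefl).
Definition z1B : V := mkV (@f3_sum p0 p1 p3 1 1 1 (p01 hm) (p03 hm) (p13 hm) erefl).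
Definition z2B : V := mkV (@f3_sum p0 p1 p2 1 1 1 (p01 hm) (p02 hm) (p12 hm) erefl).

Ltac pne := have := p01 hm; have := p02 hm; have := p03 hm; have := p12 hm;
  have := p13 hm; have := p23 hm; move=> ? ? ? ? ? ?.
Ltac ev := rewrite /xB /yB /z1B /z2B ?co_gB ?co_mkV /f3 /=; isplit; try done.

Lemma xB_in : xB \in CsB hm. Proof. exact: imset_f. Qed.
Lemma yB_out : yB \notin CsB hm. Proof. pne; apply: (notCB (j := p2)) => //; ev. Qed.
Lemma z1B_out : z1B \notin CsB hm. Proof. pne; apply: (notCB (j := p3)) => //; ev. Qed.
Lemma z2B_out : z2B \notin CsB hm. Proof. pne; apply: (notCB (j := p2)) => //; ev. Qed.

Lemma cnt_yB : cntN adj (CsB hm) yB = 0.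
Proof. pne; apply: (cntB_multi (j := p2) (j' := p3)) => //; ev. Qed.
Lemma cnt_z1B : cntN adj (CsB hm) z1B = 2.
Proof. pne; apply: (cntB_single (j := p3)) => //; ev; move=> i i0 i1 i3; ev. Qed.
Lemma cnt_z2B : cntN adj (CsB hm) z2B = 2.
Proof. pne; apply: (cntB_single (j := p2)) => //; ev; move=> i i0 i1 i2; ev. Qed.

Lemma witB : (xB != yB) /\ (~~ sw xB yB) /\ (sw xB z1B) /\ (sw yB z1B) /\ (sw xB z2B) /\ (sw yB z2B) /\ (sw z1B z2B).
Proof.
have Y := yB_out; have Z1 := z1B_out; have Z2 := z2B_out; have X := xB_in.
pne.
split; [|split; [|split; [|split; [|split; [|split]]]]].
- by apply: (vneq (i := p0)); ev.
- rewrite swr_io // cnt_yB /= addbF; apply: (not_adj3 (p := p0) (q := p2) (r := p3)) => //; ev.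
- rewrite swr_io // cnt_z1B /= addbT; apply: (not_adj3 (p := p0) (q := p1) (r := p3)) => //; ev.
- rewrite swr_out //; apply: (adjI (a := p1) (b := p2)) => //; ev; move=> i *; ev.
- rewrite swr_io // cnt_z2B /= addbT; apply: (not_adj3 (p := p0) (q := p1) (r := p2)) => //; ev.
- rewrite swr_out //; apply: (adjI (a := p1) (b := p3)) => //; ev; move=> i *; ev.
- rewrite swr_out //; apply: (adjI (a := p2) (b := p3)) => //; ev; move=> i *; ev.
Qed.

Lemma exactB (z : V) : sw xB z -> sw yB z -> z = z1B \/ z = z2B.
Proof.
have Y := yB_out; have X := xB_in.
pne.
case: (boolP (z \in CsB hm)) => zC.
  move=> _; rewrite swr_oi // cnt_yB /= addbF.
  case/imsetP: zC => k _ -> A; exfalso; move: A; apply/negP.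
  case: (eqVneq (val k) 1) => hk.
    apply: (not_adj3 (p := p1) (q := p2) (r := p3)) => //; ev; by rewrite hk.
  apply: (not_adj3 (p := p0) (q := p2) (r := p3)) => //; ev; by rewrite eq_sym.
rewrite swr_io // swr_out //.
case: (clsB zC) => j [/andP [j0 j1] jp [H|[j' /and4P [j'0 j'1 j'j j'p]]]]; last first.
  rewrite (cntB_multi j0 j1 jp j'0 j'1 j'j j'p) /= addbF => A; exfalso; move: A; apply/negP.
  have S := co_sum z; rewrite (sum3 _ (p01 hm) (ne_sym j0) (ne_sym j1)) (bigD1 j') /= in S;
    last by rewrite j'0 j'1 j'j.
  have gj : forall i, i != p0 -> i != p1 -> co xB i = 0 by move=> i i0 i1; ev.
  apply: (not_adj3 (p := p0) (q := j) (r := j')) => //.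
  - by rewrite eq_sym.
  - by rewrite eq_sym.
  - by rewrite eq_sym.
  - rewrite /xB co_gB eqxx /=; apply/eqP; move: j'p; rewrite -lt0n => j'p; clear -S jp j'p; lia.
  - by rewrite gj // eq_sym -lt0n.
  - by rewrite gj // eq_sym.
rewrite (cntB_single j0 j1 jp H) /= addbT => nA A.
have S := single_co j0 j1 H.
have hb : co z p1 != 0.
  apply/negP => /eqP b0; move/negP: nA; apply.
  apply: (adjI (a := p0) (b := j)) => //.
  - by rewrite eq_sym.
  - rewrite /xB co_gB eqxx /=; apply/eqP; clear -S jp; lia.
  - by rewrite /xB co_gB (negbTE j0) (negbTE j1) eq_sym -lt0n.
  move=> i i0 ij; rewrite /xB co_gB (negbTE i0).
  case: (eqVneq i p1) => [->|i1]; first by rewrite b0.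
  by rewrite H.
case: (eqVneq j p2) => [E2|j2]; [|case: (eqVneq j p3) => [E3|j3]].
- subst j; right.
  case: (eqVneq (co z p0) 1) => ha; last first.
    by exfalso; move: A; apply/negP; apply: (not_adj3 (p := p0) (q := p1) (r := p3)) => //; ev;
      rewrite ?H // eq_sym.
  case: (eqVneq (co z p2) 1) => hr; last first.
    by exfalso; move: A; apply/negP; apply: (not_adj3 (p := p1) (q := p2) (r := p3)) => //; ev;
      rewrite ?H // eq_sym.
  apply: vext => i; rewrite /z2B co_mkV /f3.
  case: (eqVneq i p0) => [->//|i0]; case: (eqVneq i p1) => [->|i1]; first by clear -S ha hr; lia.
  case: (eqVneq i p2) => [->//|i2]; by rewrite H.
- subst j; left.
  case: (eqVneq (co z p0) 1) => ha; last first.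
    by exfalso; move: A; apply/negP; apply: (not_adj3 (p := p0) (q := p1) (r := p2)) => //; ev;
      rewrite ?H // eq_sym.
  case: (eqVneq (co z p3) 1) => hr; last first.
    by exfalso; move: A; apply/negP; apply: (not_adj3 (p := p1) (q := p3) (r := p2)) => //; ev;
      rewrite ?H // eq_sym.
  apply: vext => i; rewrite /z1B co_mkV /f3.
  case: (eqVneq i p0) => [->//|i0]; case: (eqVneq i p1) => [->|i1]; first by clear -S ha hr; lia.
  case: (eqVneq i p3) => [->//|i3]; by rewrite H.
- exfalso; move: A; apply/negP; apply: (not_adj3 (p := p1) (q := j) (r := p2)) => //;
    try by rewrite eq_sym.
  all: ev.
  - by rewrite eq_sym -lt0n.
  - by rewrite H // ne_sym.
Qed.
End CaseB2.

Lemma gA_clique n (n3 : 3 <= n) (s t : SRV 4 n) : s \in CsA n -> t \in CsA n -> s != t -> sr_adj s t.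
Proof.
case/imsetP => i _ ->; case/imsetP => j _ -> ne.
have ij : i != j by apply: contraNneq ne => ->.
apply: (@adjI 4 n _ _ i j ij) => [||k ki kj]; rewrite !co_gA ?eqxx ?(negbTE ij) ?(negbTE (ne_sym ij)).
- by apply/eqP; lia.
- by apply/eqP; lia.
by rewrite (negbTE ki) (negbTE kj).
Qed.

Theorem proposition14 (m n : nat) :
  (m = 4 /\ 3 <= n) \/ (n = 3 /\ 4 <= m) ->
  exists (T : finType) (e : rel T),
    simple_graph e /\ cospectral e (@sr_adj m n) /\ ~ graph_iso e (@sr_adj m n).
Proof.
case=> [[-> hn]|[-> hm]].
- exists (SRV 4 n), (swr (@sr_adj 4 n) (CsA n)); split; [|split].
  + apply: swr_simple; first exact: adj_sym.
    by move=> u; apply: negbTE (adj_irr u).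
  + rewrite /cospectral; apply: cp_int.
    * exact: adj_sym.
    * by move=> u; apply: negbTE (adj_irr u).
    * by rewrite card_imset ?cardsT ?card_ord //; apply: gA_inj.
    * exact: gA_clique.
    * move=> w wC; rewrite cntA //; by case: (nz w == 2); [right|left].
  + have [W1 [W2 [W3 [W4 [W5 [W6 W7]]]]]] := witA hn.
    apply: (noniso_of W1 W2 W3 W4 W5 W6 W7).
      exact: exactA.
    move=> x y z1 z2; exact: sr_pattern.
- have hm' : 3 < m by [].
  exists (SRV m 3), (swr (@sr_adj m 3) (CsB hm')); split; [|split].
  + apply: swr_simple; first exact: adj_sym.
    by move=> u; apply: negbTE (adj_irr u).
  + rewrite /cospectral; apply: cp_int.
    * exact: adj_sym.
    * by move=> u; apply: negbTE (adj_irr u).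
    * by rewrite card_imset ?cardsT ?card_ord //; apply: gB_inj.
    * exact: gB_clique.
    * exact: CoutB.
  + have [W1 [W2 [W3 [W4 [W5 [W6 W7]]]]]] := witB hm'.
    apply: (noniso_of W1 W2 W3 W4 W5 W6 W7).
      exact: exactB.
    move=> x y z1 z2; exact: sr_pattern.
Qed.
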